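(* Let $r\ge 2$ and $(\boldsymbol\lambda,\mathbf{s})\in\mathcal{A}_e^r$. Then the map $\eta\circ\Psi_r$ restricts to a bijection from the $\approx_e$-equivalence class of $(\boldsymbol\lambda,\mathbf{s})$ in $\mathcal{A}_e^r$ onto the $\approx_r$-equivalence class of $\eta(\Psi_r(\boldsymbol\lambda,\mathbf{s}))$ in $\mathcal{A}_r^e$.
   Context: Fix an integer $e\ge 2$. A partition is a weakly decreasing sequence $\lambda=(\lambda_1,\lambda_2,\dots)$ of non-negative integers with finite sum $|\lambda|$; $\Lambda$ denotes the set of partitions and $\Lambda^{(m)}$ the set of $m$-multipartitions, i.e. $m$-tuples $\boldsymbol\lambda=(\lambda^{(1)},\dots,\lambda^{(m)})$ of partitions, with $|\boldsymbol\lambda|=\sum_k|\lambda^{(k)}|$. A $\beta$-set is a subset $B\subseteq\mathbb{Z}$ containing all sufficiently small integers and no sufficiently large ones. For $\lambda\in\Lambda$ and $s\in\mathbb{Z}$ set $B_s(\lambda)=\{\lambda_i-i+s : i\ge 1\}$; every $\beta$-set equals $B_s(\lambda)$ for a unique pair $(\lambda,s)$. For $N\ge 2$ let $\mathcal{A}_N=\Lambda\times\mathbb{Z}$ (abacus configurations with $N$ runners) and $\mathcal{A}_N^m=\Lambda^{(m)}\times\mathbb{Z}^m$, where $(\boldsymbol\lambda,\mathbf{s})$ is identified with the $m$-tuple of $\beta$-sets $(B_{s_1}(\lambda^{(1)}),\dots,B_{s_m}(\lambda^{(m)}))$. Blocks: for $(\boldsymbol\lambda,\mathbf{s})\in\mathcal{A}_N^m$,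 its $N$-residue multiset is the multiset of the values $s_k+y-x \bmod N$ over all nodes $(x,y,k)$ with $x\ge1$, $1\le y\le\lambda^{(k)}_x$, $1\le k\le m$. Define $(\boldsymbol\lambda,\mathbf{s})\approx_N(\boldsymbol\mu,\mathbf{s}')$ iff $\mathbf{s}=\mathbf{s}'$, $|\boldsymbol\lambda|=|\boldsymbol\mu|$ and the $N$-residue multisets coincide. Its equivalence classes are called blocks. The map $\eta$: for $(\lambda,s)\in\mathcal{A}_e$ with $B=B_s(\lambda)$ and $0\le i<e$, the set $C_i=\{(b-i)/e : b\in B,\ b\equiv i \bmod e\}$ is a $\beta$-set, so $C_i=B_{t_i}(\rho_i)$ for a unique $(\rho_i,t_i)\in\Lambda\times\mathbb{Z}$; set $\eta(\lambda,s)=((\rho_0,\dots,\rho_{e-1}),(t_0,\dots,t_{e-1}))\in\Lambda^{(e)}\times\mathbb{Z}^e$, which we also regard as an element of $\mathcal{A}_r^e$. Uglov's map: for $1\le k\le r$ define $\psi_k:\mathbb{Z}\to\mathbb{Z}$ by $\psi_k(ae+i)=((a+1)r-k)e+i$ for $a\in\mathbb{Z}$, $0\le i<e$. For $(\boldsymbol\lambda,\mathbf{s})\in\mathcal{A}_e^r$ the set $B=\bigsqcup_{k=1}^r\psi_k(B_{s_k}(\lambda^{(k)}))$ is a $\beta$-set, and $\Psi_r(\boldsymbol\lambda,\mathbf{s})$ is the unique $(\tilde\lambda,\tilde s)\in\mathcal{A}_e$ with $B_{\tilde s}(\tilde\lambda)=B$. $\Psi_r:\mathcal{A}_e^r\to\mathcal{A}_e$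 is a bijection; $\Phi_r=\Psi_r^{-1}$. *)

(* Defs.v *)
From Stdlib Require Import ClassicalEpsilon.
From mathcomp Require Import all_boot all_order all_algebra.
Unset Printing Implicit Defensive.
Import Order.TTheory GRing.Theory Num.Theory.
Local Open Scope ring_scope.

(* A partition: a weakly decreasing finite sequence of positive naturals
   (trailing zeros omitted); lambda_i = nth 0 l (i-1). *)
Definition is_part (l : seq nat) : bool :=
  sorted geq l && all (fun x => (0 < x)%N) l.

Definition partition := {l : seq nat | is_part l}.

Definition part0 : partition := exist _ [::] (erefl true).

Definition part_size (p : partition) : nat := sumn (sval p).

(* part i = lambda_{i+1} *)
Definition part_at (p : partition) (i : nat) : nat := nth 0%N (sval p) i.

(* A_N^m (the number N of runners only matters for blocks):
   m-multipartitions together with m-multicharges. Index k : 'I_m stands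
   for the paper's k+1. *)
Definition config (m : nat) := ({ffun 'I_m -> partition} * {ffun 'I_m -> int})%type.

Definition config_size m (c : config m) : nat := (\sum_(k < m) part_size (c.1 k))%N.

Definition in_beta (s : int) (p : partition) (b : int) : Prop :=
  exists i : nat, b = (part_at p i)%:Z - (i.+1)%:Z + s.

Definition rescount (N : nat) m (c : config m) (j : int) : nat :=
  (\sum_(k < m) \sum_(x < size (sval (c.1 k)))
     \sum_(y < part_at (c.1 k) x)
        ((c.2 k + (y.+1)%:Z - (x.+1)%:Z - j) %% N%:Z == 0)%Z)%N.

Definition approx (N : nat) m (c d : config m) : Prop :=
  c.2 = d.2 /\ config_size m c = config_size m d /\
  forall j : int, rescount N m c j = rescount N m d j.

Definition eta_spec (e : nat) (c : partition * int) (d : config e) : Prop :=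
  forall (i : 'I_e) (x : int),
    in_beta (d.2 i) (d.1 i) x <-> in_beta c.2 c.1 (x * e%:Z + (i : nat)%:Z).

Definition config0 m : config m := ([ffun => part0], [ffun => 0]).

Definition eta (e : nat) (c : partition * int) : config e :=
  epsilon (inhabits (config0 e)) (eta_spec e c).

(* Uglov's psi_k, for k : 'I_r standing for k+1 *)
Definition psi (e r : nat) (k : 'I_r) (b : int) : int :=
  (((b %/ e%:Z)%Z + 1) * r%:Z - (k.+1)%:Z) * e%:Z + (b %% e%:Z)%Z.

Definition Psi_spec (e r : nat) (c : config r) (d : partition * int) : Prop :=
  forall b : int, in_beta d.2 d.1 b <->
    exists (k : 'I_r) (a : int), in_beta (c.2 k) (c.1 k) a /\ b = psi e r k a.

Definition Psi (e r : nat) (c : config r) : partition * int :=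
  epsilon (inhabits (part0, 0)) (Psi_spec e r c).

(* Main.v *)
Require Import Defs.
From Stdlib Require Import ClassicalEpsilon.
From mathcomp Require Import all_boot all_order all_algebra.
From mathcomp Require Import zify ring lra.
Import Order.TTheory GRing.Theory Num.Theory.
Local Open Scope ring_scope.

Definition ib (s : int) (l : seq nat) (b : int) : Prop :=
  exists i : nat, b = (nth 0%N l i)%:Z - (i.+1)%:Z + s.

Lemma in_betaE s p b : in_beta s p b <-> ib s (sval p) b.
Proof. by []. Qed.

Lemma ib_nil s b : ib s [::] b <-> b < s.
Proof.
split; first by move=> [i ->]; rewrite nth_nil; lia.
move=> h; exists (absz (s - 1 - b)%R); rewrite nth_nil; lia.
Qed.

Lemma ib_cons s a l b : ib s (a :: l) b <-> b = a%:Z - 1 + s \/ ib (s - 1) l b.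
Proof.
split.
  by move=> [[|i] ->] /=; [left; lia | right; exists i; lia].
by move=> [->|[i ->]]; [exists 0%N => /=; lia | exists i.+1 => /=; lia].
Qed.

Lemma is_part_cons a l : is_part (a :: l) ->
  [/\ is_part l, (0 < a)%N & (head 0%N l <= a)%N].
Proof.
rewrite /is_part /= => /andP [hs /andP [ha hl]].
rewrite ha hl (path_sorted hs) /=; split => //.
by case: l hs {hl} => //= x l /andP [].
Qed.

Lemma ib_max {s l b} : is_part l -> ib s l b -> b <= (head 0%N l)%:Z - 1 + s.
Proof.
elim: l s b => [|a l IH] s b.
  by move=> _ /ib_nil /=; lia.
move=> /is_part_cons [hl ha hh] /ib_cons [->|/(IH _ _ hl)] /=; lia.
Qed.

Lemma ib_low s l b : b < s - (size l)%:Z -> ib s l b.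
Proof.
elim: l s b => [|a l IH] s b /=; first by move=> h; apply/ib_nil; lia.
move=> h; apply/ib_cons; right; apply: IH; lia.
Qed.

Lemma ib_gap s l : is_part l -> ~ ib s l (s - (size l)%:Z).
Proof.
elim: l s => [|a l IH] s /=; first by move=> _ /ib_nil; lia.
move=> /is_part_cons [hl ha _] /ib_cons [h|h]; first lia.
by apply: (IH (s - 1) hl); move: h; congr ib; lia.
Qed.

Lemma ib_split s l b : is_part l ->
  (ib s l b <-> b = (head 0%N l)%:Z - 1 + s \/ ib (s - 1) (behead l) b).
Proof.
case: l => [|a l] /=; last by move=> _; apply: ib_cons.
move=> _; rewrite !ib_nil; lia.
Qed.

Lemma ib_rest_lt {s l b} : is_part l -> ib (s - 1) (behead l) b ->
  b < (head 0%N l)%:Z - 1 + s.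
Proof.
case: l => [|a l] /=; first by move=> _ /ib_nil; lia.
move=> /is_part_cons [hl _ hh] /(ib_max hl); lia.
Qed.

Lemma is_part_behead {l} : is_part l -> is_part (behead l).
Proof. by case: l => // a l /is_part_cons []. Qed.

Lemma ib_inj_aux n s s' l l' : (size l + size l' <= n)%N ->
  is_part l -> is_part l' -> (forall b, ib s l b <-> ib s' l' b) ->
  s = s' /\ l = l'.
Proof.
elim: n s s' l l' => [|n IH] s s' l l'.
  case: l => // ; case: l' => // _ _ _ h.
  have h1 : ib s [::] (s - 1) by apply/ib_nil; lia.
  have h2 : ib s' [::] (s' - 1) by apply/ib_nil; lia.
  move: (proj1 (h _) h1) (proj2 (h _) h2); rewrite !ib_nil => *; split; [lia|done].
move=> hn hl hl' h.
set t := (head 0%N l)%:Z - 1 + s.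
set t' := (head 0%N l')%:Z - 1 + s'.
have ht : ib s l t by apply/ib_split => //; left.
have ht' : ib s' l' t' by apply/ib_split => //; left.
have e1 := ib_max hl' (proj1 (h t) ht).
have e2 := ib_max hl (proj2 (h t') ht').
have ett : t = t' by rewrite /t /t'; lia.
have hr : forall b, ib (s - 1) (behead l) b <-> ib (s' - 1) (behead l') b.
  move=> b; split => hb.
    have := ib_rest_lt hl hb; have := proj1 (h b) (proj2 (ib_split _ _ _ hl) (or_intror hb)).
    move/(ib_split _ _ _ hl') => [->|//]; rewrite -/t' -ett; lia.
  have := ib_rest_lt hl' hb; have := proj2 (h b) (proj2 (ib_split _ _ _ hl') (or_intror hb)).
  move/(ib_split _ _ _ hl) => [->|//]; rewrite -/t ett; lia.
move: ett hr; rewrite /t /t'; clear t t' ht ht' e1 e2 => ett hr.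
case: l hl hn h ett hr => [|a l0]; case: l' hl' => [|a' l0'] //=.
- move=> _ _ _ _ et _; split; [lia|done].
- move=> hl' hl hn _ et hr.
  have [hs _] := IH (s - 1) (s' - 1) nil l0' ltac:(move: hn => /=; lia) (is_part_behead hl) (is_part_behead hl') hr.
  move: hl' => /is_part_cons [_ ha _]; move: et; lia.
- move=> hl' hl hn _ et hr.
  have [hs _] := IH (s - 1) (s' - 1) l0 nil ltac:(move: hn => /=; lia) (is_part_behead hl) (is_part_behead hl') hr.
  move: hl => /is_part_cons [_ ha _]; move: et; lia.
- move=> hl' hl hn _ et hr.
  have [hs ->] := IH (s - 1) (s' - 1) l0 l0' ltac:(move: hn => /=; lia) (is_part_behead hl) (is_part_behead hl') hr.
  split; first lia.
  by congr (_ :: _); lia.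
Qed.

Lemma ib_inj s s' l l' : is_part l -> is_part l' ->
  (forall b, ib s l b <-> ib s' l' b) -> s = s' /\ l = l'.
Proof. exact: (@ib_inj_aux (size l + size l')%N s s' l l' (leqnn _)). Qed.

Lemma is_part_consI a l : is_part l -> (0 < a)%N -> (head 0%N l <= a)%N ->
  is_part (a :: l).
Proof.
rewrite /is_part => /andP [hs ha] a0 hh /=.
rewrite a0 ha andbT; case: l hs ha hh => //= x l -> _ ->; by [].
Qed.

Lemma ib_exists_aux (M : int) (N : nat) (P : int -> Prop) :
  (forall b, b < M -> P b) -> (forall b, M + N%:Z <= b -> ~ P b) ->
  exists s l, is_part l /\ forall b, P b <-> ib s l b.
Proof.
elim: N P => [|N IH] P hlo hhi.
  exists M, [::]; split => // b; rewrite ib_nil; split; last exact: hlo.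
  by move=> hb; case: (ltrP b M) => // h; exfalso; apply: (hhi b) => //; lia.
pose P' b := P b /\ b < M + N%:Z.
have [s [l [hl hP]]] : exists s l, is_part l /\ forall b, P' b <-> ib s l b.
  apply: IH => b hb; first by split; [apply: hlo | lia].
  by move=> -[_]; lia.
have hlt : forall b, ib s l b -> b < M + N%:Z by move=> b /hP [].
have hPv : forall b, P b <-> b = M + N%:Z /\ P (M + N%:Z) \/ P' b.
  move=> b; split; last by case=> [[-> //]|[]].
  move=> hb; case: (ltrP b (M + N%:Z)) => h; first by right.
  case: (ltrP (M + N%:Z) b) => h2; first by exfalso; apply: (hhi b) => //; lia.
  have e : b = M + N%:Z by lia.
  by left; split => //; rewrite -e.
case: (classic (P (M + N%:Z))) => hv; last first.
  exists s, l; split => // b; rewrite -hP hPv; split; last by right.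
  by case=> // -[_ ?].
have htop := hlt _ (proj2 (ib_split s l _ hl) (or_introl erefl)).
case: (ltrP 0 (M + N%:Z - s)) => hpos.
  exists (s + 1), (absz (M + N%:Z - s)%R :: l); split.
    apply: is_part_consI => //; lia.
  move=> b; rewrite hPv ib_cons addrK -hP; split.
    by case=> [[-> _]|h]; [left; lia | right].
  by case=> [->|h]; [left; split => //; lia | right].
have l0 : l = [::].
  by case: l hl htop {hlt hP} => // x l /is_part_cons [_ x0 _] /=; lia.
subst l.
exists (s + 1), [::]; split => // b; rewrite hPv hP !ib_nil; split.
  by case=> [[-> _]|h]; lia.
move=> hb; case: (ltrP b s) => h; [by right | by left; split => //; lia].
Qed.

Definition bnd (P : int -> Prop) (D : nat) :=
  (forall b, b < - D%:Z -> P b) /\ (forall b, D%:Z <= b -> ~ P b).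

Lemma bnd_exists {P D} : bnd P D ->
  exists (p : Defs.partition) (s : int), forall b, P b <-> in_beta s p b.
Proof.
move=> [hlo hhi].
have [s [l [hl hP]]] := @ib_exists_aux (- D%:Z) (D + D)%N P hlo
  ltac:(move=> b hb; apply: hhi; lia).
by exists (exist _ l hl), s.
Qed.

Lemma ib_bnd s l : is_part l -> bnd (ib s l) (absz s + size l + head 0%N l)%N.
Proof.
move=> hl; split => b hb; first by apply: ib_low; lia.
move/(ib_max hl); lia.
Qed.

Lemma bnd_mono {P D D'} : bnd P D -> (D <= D')%N -> bnd P D'.
Proof.
move=> [h1 h2] hD; split => b hb; [apply: h1 | apply: h2]; lia.
Qed.

Lemma bnd_ext {P Q D} : (forall b, P b <-> Q b) -> bnd P D -> bnd Q D.
Proof. by move=> h [h1 h2]; split => b hb; [apply/h; apply: h1 | move/h; apply: h2]. Qed.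

Lemma dm_div q m (d : nat) : 0 <= m < d%:Z -> (divz (q * d%:Z + m) d%:Z) = q.
Proof.
move=> /andP [h0 h1]; rewrite divzMDl ?divz_small ?addr0 //; first by rewrite h0.
lia.
Qed.

Lemma dm_mod q m (d : nat) : 0 <= m < d%:Z -> (modz (q * d%:Z + m) d%:Z) = m.
Proof. by move=> h; rewrite modzMDl modz_small. Qed.

Lemma mod_bnd (b : int) {d : nat} : (0 < d)%N -> 0 <= (modz b d%:Z) < d%:Z.
Proof.
move=> hd; rewrite modz_ge0 /=; last by lia.
by rewrite ltz_pmod //; lia.
Qed.

Lemma ex_ord (r : nat) (z : int) : 0 <= z < r%:Z -> exists k : 'I_r, k%:Z = z.
Proof.
move=> /andP [h0 h1]; have hk : (absz z < r)%N by lia.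
by exists (Ordinal hk) => /=; lia.
Qed.

Lemma psi_inv (e r : nat) (k : 'I_r) a b : (0 < e)%N ->
  b = psi e r k a <->
  k%:Z = r%:Z - 1 - (modz ((divz b e%:Z)) r%:Z) /\ a = ((divz ((divz b e%:Z)) r%:Z)) * e%:Z + (modz b e%:Z).
Proof.
move=> he; have hr : (0 < r)%N by case: k => /= k; lia.
have hk := ltn_ord k.
split.
  move=> ->; rewrite /psi.
  have hi := mod_bnd a he.
  rewrite (@dm_div _ _ e) // (@dm_mod _ _ e) //.
  set q := divz a e%:Z.
  have hj : 0 <= r%:Z - 1 - k%:Z < r%:Z by lia.
  have -> : (q + 1) * r%:Z - (k.+1)%:Z = q * r%:Z + (r%:Z - 1 - k%:Z) by lia.
  rewrite dm_div // dm_mod //; split; first by lia.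
  exact: divz_eq.
move=> [ek ->]; rewrite /psi.
set Q := (divz b e%:Z).
have hi := mod_bnd b he; have hQ := mod_bnd Q hr.
rewrite dm_div // dm_mod //.
rewrite [in LHS](divz_eq b e%:Z) -/Q; congr (_ * _ + _).
rewrite [in LHS](divz_eq Q r%:Z); move: ek; rewrite -/Q; lia.
Qed.

Definition Pset e r (c : config r) (b : int) : Prop :=
  exists (k : 'I_r) (a : int), in_beta (c.2 k) (c.1 k) a /\ b = psi e r k a.

Lemma Pset_iff {e r} {c : config r} {b} : (0 < e)%N ->
  Pset e r c b <-> exists k : 'I_r, k%:Z = r%:Z - 1 - (modz ((divz b e%:Z)) r%:Z) /\
      in_beta (c.2 k) (c.1 k) (((divz ((divz b e%:Z)) r%:Z)) * e%:Z + (modz b e%:Z)).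
Proof.
move=> he; split.
  by move=> [k [a [ha /(psi_inv _ _ _ _ _ he) [ek ea]]]]; exists k; split => //; rewrite -ea.
move=> [k [ek hk]]; exists k; eexists; split; first exact: hk.
by apply/(psi_inv _ _ _ _ _ he).
Qed.

Definition Dp (s : int) (p : Defs.partition) : nat :=
  (absz s + size (sval p) + head 0%N (sval p))%N.

Lemma bnd_beta s p : bnd (in_beta s p) (Dp s p).
Proof. by case: p => l hl; apply: ib_bnd. Qed.

Definition Dc {m} (c : config m) : nat := (\sum_(k < m) Dp (c.2 k) (c.1 k))%N.

Lemma leq_term {m} (F : 'I_m -> nat) k : (F k <= \sum_(i < m) F i)%N.
Proof. by rewrite (bigD1 k) //= leq_addr. Qed.

Lemma bnd_comp m (c : config m) k D : (Dc c <= D)%N -> bnd (in_beta (c.2 k) (c.1 k)) D.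
Proof.
move=> h; apply: (bnd_mono (bnd_beta _ _)); apply: leq_trans h.
exact: (leq_term (fun k => Dp (c.2 k) (c.1 k))).
Qed.

Lemma Pset_bnd e r (c : config r) : (0 < e)%N -> (0 < r)%N ->
  bnd (Pset e r c) (Dc c * r * e)%N.
Proof.
move=> he hr; set D := Dc c.
have hb : forall k, bnd (in_beta (c.2 k) (c.1 k)) D by move=> k; apply: bnd_comp.
split => b hb0; rewrite (Pset_iff he).
  set Q := (divz b e%:Z).
  have hQ := mod_bnd Q hr.
  have [k ek] := ex_ord r (r%:Z - 1 - (modz Q r%:Z)) ltac:(lia).
  exists k; split => //; apply: (proj1 (hb k)).
  have h1 : Q < - (D * r)%N%:Z by rewrite ltz_divLR; [lia | lia].
  have h2 : (divz Q r%:Z) < - D%:Z by rewrite ltz_divLR; [lia | lia].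
  have hi := mod_bnd b he.
  nia.
move=> [k [_ hk]]; apply: (proj2 (hb k)) hk.
set Q := (divz b e%:Z).
have h1 : (D * r)%N%:Z <= Q by rewrite lez_divRL; [lia | lia].
have h2 : D%:Z <= (divz Q r%:Z) by rewrite lez_divRL; [lia | lia].
have hi := mod_bnd b he.
nia.
Qed.

Lemma Psi_ok e r (c : config r) : (0 < e)%N -> (0 < r)%N ->
  Psi_spec e r c (Psi e r c).
Proof.
move=> he hr; rewrite /Psi; apply: epsilon_spec.
have [p [s hs]] := bnd_exists (@Pset_bnd e r c he hr).
by exists (p, s) => b /=; rewrite -hs.
Qed.

Lemma eta_ok e (c : Defs.partition * int) : (0 < e)%N -> eta_spec e c (eta e c).
Proof.
move=> he; rewrite /eta; apply: epsilon_spec.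
have H : forall i : 'I_e, exists ps : Defs.partition * int,
    forall x, in_beta ps.2 ps.1 x <-> in_beta c.2 c.1 (x * e%:Z + i%:Z).
  move=> i; set D := Dp c.2 c.1.
  have [h1 h2] := bnd_beta c.2 c.1.
  have hi := ltn_ord i.
  have hB : bnd (fun x => in_beta c.2 c.1 (x * e%:Z + i%:Z)) D.
    split => x hx; [apply: h1 | apply: h2]; nia.
  have [p [s hs]] := bnd_exists hB.
  by exists (p, s) => x /=; rewrite -hs.
pose f i := proj1_sig (constructive_indefinite_description _ (H i)).
exists ([ffun i => (f i).1], [ffun i => (f i).2]) => i x /=; rewrite !ffunE.
exact: (proj2_sig (constructive_indefinite_description _ (H i))).
Qed.

Lemma F_iff e r (c : config r) (i : 'I_e) x : (0 < e)%N -> (0 < r)%N ->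
  in_beta ((eta e (Psi e r c)).2 i) ((eta e (Psi e r c)).1 i) x <->
  exists k : 'I_r, k%:Z = r%:Z - 1 - (modz x r%:Z) /\
     in_beta (c.2 k) (c.1 k) (((divz x r%:Z)) * e%:Z + i%:Z).
Proof.
move=> he hr; rewrite (eta_ok _ _ he) (Psi_ok _ _ c he hr).
have := @Pset_iff e r c (x * e%:Z + i%:Z) he; rewrite /Pset => ->.
have hi : 0 <= i%:Z < e%:Z by have := ltn_ord i; lia.
by rewrite dm_div // dm_mod.
Qed.

Definition ind (P : Prop) : int := if excluded_middle_informative P then 1 else 0.

Lemma indT {P : Prop} : P -> ind P = 1.
Proof. by rewrite /ind; case: excluded_middle_informative. Qed.
Lemma indF {P : Prop} : ~ P -> ind P = 0.
Proof. by rewrite /ind; case: excluded_middle_informative. Qed.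
Lemma ind_iff {P Q : Prop} : (P <-> Q) -> ind P = ind Q.
Proof.
move=> h; case: (classic P) => hP.
  by rewrite !indT //; apply/h.
by rewrite !indF // => /h.
Qed.
Lemma ind_or {P Q : Prop} : (P -> ~ Q) -> ind (P \/ Q) = ind P + ind Q.
Proof.
move=> h; case: (classic P) => hP.
  by rewrite (indT (or_introl hP)) (indT hP) (indF (h hP)) addr0.
case: (classic Q) => hQ.
  by rewrite (indT (or_intror hQ)) (indT hQ) (indF hP) add0r.
by rewrite !indF // => -[].
Qed.

Lemma sum_rev K (F : int -> int) :
  \sum_(x < K) F x%:Z = \sum_(x < K) F (K%:Z - 1 - x%:Z).
Proof.
rewrite (reindex_inj rev_ord_inj) /=; apply: eq_bigr => x _.
congr F; have := ltn_ord x; lia.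
Qed.

Lemma sum_ind_eq (N : nat) M v (g : int -> int) : M <= v < M + N%:Z ->
  \sum_(t < N) ind (M + t%:Z = v) * g (M + t%:Z) = g v.
Proof.
move=> /andP [h1 h2]; have ht : (absz (v - M)%R < N)%N by lia.
rewrite (bigD1 (Ordinal ht)) //= big1 ?addr0.
  by rewrite indT ?mul1r; [congr g|]; lia.
move=> t /eqP ne; rewrite indF ?mul0r // => e; apply: ne; apply: val_inj => /=; lia.
Qed.

Lemma win s l M (N : nat) : is_part l ->
  (forall b, b < M -> ib s l b) -> (forall b, M + N%:Z <= b -> ~ ib s l b) ->
  [/\ M + (size l)%:Z <= s, s <= M + N%:Z &
   forall g : int -> int,
     \sum_(t < N) ind (ib s l (M + t%:Z)) * g (M + t%:Z) =
     \sum_(x < absz (s - M)%R) g ((nth 0%N l x)%:Z - (x.+1)%:Z + s)].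
Proof.
elim: l s => [|a l IH] s hl hlo hhi.
  have h1 : M <= s.
    case: (ltrP s M) => // h; have := hlo _ h; rewrite ib_nil; lia.
  have h2 : s <= M + N%:Z.
    case: (ltrP (M + N%:Z) s) => // h; exfalso; apply: (hhi (s - 1)); first lia.
    by apply/ib_nil; lia.
  split => //=; first lia.
  move=> g; set K := absz (s - M)%R.
  have hK : (K <= N)%N by lia.
  have -> : \sum_(x < K) g ((nth 0%N [::] x)%:Z - (x.+1)%:Z + s) =
            \sum_(x < K) g (M + x%:Z).
    rewrite (reindex_inj rev_ord_inj) /=; apply: eq_bigr => x _.
    rewrite nth_nil; congr g; have := ltn_ord x; lia.
  rewrite (big_ord_widen N (fun x => g (M + x%:Z)) hK) [RHS]big_mkcond /=.
  apply: eq_bigr => t _.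
  case: ifP => ht.
    rewrite indT ?mul1r; last by apply/ib_nil; lia.
    by congr g; lia.
  by rewrite indF ?mul0r // => /ib_nil; lia.
have [hl' a0 hh] := is_part_cons _ _ hl.
have hgap := ib_gap s _ hl.
have hMs : M <= s - (size (a :: l))%:Z.
  by case: (ltrP (s - (size (a :: l))%:Z) M) => // h; exfalso; apply: hgap; apply: hlo.
have hlo' : forall b, b < M -> ib (s - 1) l b.
  move=> b hb; have := hlo b hb; case/ib_cons => [eb|//].
  by exfalso; move: hMs hb; rewrite eb /=; lia.
have hhi' : forall b, M + N%:Z <= b -> ~ ib (s - 1) l b.
  by move=> b hb h; apply: (hhi b hb); apply/ib_cons; right.
have [IH1 IH2 IH3] := IH (s - 1) hl' hlo' hhi'.
have htop : a%:Z - 1 + s < M + N%:Z.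
  case: (ltrP (a%:Z - 1 + s) (M + N%:Z)) => // h; exfalso; apply: (hhi _ h).
  by apply/ib_cons; left.
split; [move: IH1 => /=; lia | lia | move=> g].
have -> : absz (s - M)%R = (absz (s - 1 - M)%R).+1 by move: hMs => /=; lia.
rewrite big_ord_recl /=.
have -> : \sum_(t < N) ind (ib s (a :: l) (M + t%:Z)) * g (M + t%:Z) =
          \sum_(t < N) ind (M + t%:Z = a%:Z - 1 + s) * g (M + t%:Z) +
          \sum_(t < N) ind (ib (s - 1) l (M + t%:Z)) * g (M + t%:Z).
  rewrite -big_split /=; apply: eq_bigr => t _; rewrite -mulrDl; congr (_ * _).
  rewrite -ind_or; first by apply: ind_iff; rewrite ib_cons.
  by move=> -> /(ib_max hl'); lia.
rewrite sum_ind_eq; last by move: hMs => /=; lia.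
rewrite IH3; congr (_ + _).
by apply: eq_bigr => x _; congr g; rewrite /bump leq0n add0n add1n; lia.
Qed.

Lemma Posz_sum (n : nat) (F : 'I_n -> nat) :
  (\sum_(i < n) F i)%N%:Z = \sum_(i < n) (F i)%:Z.
Proof.
elim: n F => [|n IH] F; first by rewrite !big_ord0.
by rewrite !big_ord_recr /= PoszD IH.
Qed.

Lemma divz_succ z (N : nat) : (0 < N)%N ->
  divz (z + 1) N%:Z = divz z N%:Z + (modz (z + 1) N%:Z == 0)%:Z.
Proof.
move=> hN; set q := divz z N%:Z; set r := modz z N%:Z.
have hz : z = q * N%:Z + r by exact: divz_eq.
have hr : 0 <= r < N%:Z by exact: mod_bnd.
rewrite hz; case: (ltrP (r + 1) N%:Z) => h.
  have -> : q * N%:Z + r + 1 = q * N%:Z + (r + 1) by ring.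
  rewrite dm_div ?dm_mod; try lia.
have -> : q * N%:Z + r + 1 = (q + 1) * N%:Z + 0 by rewrite mulrDl mul1r; lia.
by rewrite dm_div ?dm_mod ?eqxx //; lia.
Qed.

Lemma cnt_mult (a : int) (N n : nat) : (0 < N)%N ->
  (\sum_(y < n) (modz (a + (y.+1)%:Z) N%:Z == 0 : nat))%N%:Z =
  divz (a + n%:Z) N%:Z - divz a N%:Z.
Proof.
move=> hN; elim: n => [|n IH]; first by rewrite big_ord0 addr0 subrr.
rewrite big_ord_recr /= PoszD IH.
have -> : a + (n.+1)%:Z = (a + n%:Z) + 1 by lia.
rewrite divz_succ //.
by rewrite addrAC.
Qed.

Lemma sum_nth (l : seq nat) (K : nat) : (size l <= K)%N ->
  \sum_(x < K) (nth 0%N l x)%:Z = (sumn l)%:Z.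
Proof.
elim: l K => [|a l IH] K hK.
  by rewrite big1 // => x _; rewrite nth_nil.
case: K hK => // K hK; rewrite big_ord_recl /= IH //.
Qed.

Definition valid (P : int -> Prop) (M : int) (N : nat) :=
  (forall b, b < M -> P b) /\ (forall b, M + N%:Z <= b -> ~ P b).

Lemma comp_formulas {s} {p : Defs.partition} {M N} : valid (in_beta s p) M N ->
  [/\ s = M + \sum_(t < N) ind (in_beta s p (M + t%:Z)),
      (part_size p)%:Z = \sum_(t < N) ind (in_beta s p (M + t%:Z)) * (M + t%:Z)
                         - \sum_(x < absz (s - M)%R) (s - 1 - x%:Z)
    & forall (n : nat) (j : int), (0 < n)%N ->
      (\sum_(x < size (sval p)) \sum_(y < part_at p x)
          ((s + (y.+1)%:Z - (x.+1)%:Z - j) %% n%:Z == 0)%Z)%N%:Z =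
      \sum_(t < N) ind (in_beta s p (M + t%:Z)) * divz (M + t%:Z - j) n%:Z
      - \sum_(x < absz (s - M)%R) divz (s - 1 - x%:Z - j) n%:Z].
Proof.
case: p => l hl [hlo hhi] /=; rewrite /part_size /part_at /=.
have [h1 h2 h3] := win s l M N hl hlo hhi.
set K := absz (s - M)%R.
have hK : (size l <= K)%N by lia.
split.
- have e := h3 (fun _ => 1); rewrite /= in e.
  rewrite (eq_bigr (fun t : 'I_N => ind (ib s l (M + t%:Z)) * 1)); last by move=> t _; rewrite mulr1.
  by rewrite e sumr_const card_ord natz; lia.
- have := h3 id => /= ->; rewrite -(sum_nth l K hK) -sumrB.
  by apply: eq_bigr => x _; ring.
move=> n j hn.
have -> := h3 (fun b => divz (b - j) n%:Z); rewrite -sumrB Posz_sum.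
rewrite (big_ord_widen K (fun x => (\sum_(y < nth 0%N l x)
   ((s + (y.+1)%:Z - (x.+1)%:Z - j) %% n%:Z == 0)%Z)%N%:Z) hK).
rewrite big_mkcond /=; apply: eq_bigr => x _.
case: ifP => hx; last first.
  rewrite nth_default; last by rewrite leqNgt hx.
  have -> : (0%N)%:Z - (x.+1)%:Z + s - j = s - 1 - x%:Z - j by lia.
  by rewrite subrr.
rewrite (eq_bigr (fun y : 'I_(nth 0%N l x) =>
   (modz ((s - (x.+1)%:Z - j) + (y.+1)%:Z) n%:Z == 0 : nat))); last first.
  by move=> y _; congr (nat_of_bool (modz _ _ == 0)); lia.
rewrite cnt_mult //; congr (divz _ _ - divz _ _); ring.
Qed.

Lemma split_aux (b k : nat) (h : nat -> int) :
  \sum_(t < b + k) h t = \sum_(t < b) h t + \sum_(i < k) h (b + i)%N.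
Proof.
elim: k => [|k IH]; first by rewrite addn0 big_ord0 addr0.
by rewrite addnS !big_ord_recr /= IH addrA.
Qed.

Lemma split_sum (a n : nat) (h : nat -> int) :
  \sum_(t < a * n) h t = \sum_(q < a) \sum_(i < n) h (q * n + i)%N.
Proof.
elim: a => [|a IH]; first by rewrite mul0n !big_ord0.
by rewrite mulSnr split_aux IH big_ord_recr.
Qed.

Definition tau {m} (n : nat) (Mq : int) (c : config m) (k : 'I_m) (i : 'I_n) (q : nat) : int :=
  ind (in_beta (c.2 k) (c.1 k) ((Mq + q%:Z) * n%:Z + i%:Z)).

Definition cA {m} n Mq Nq (c : config m) (k : 'I_m) : int :=
  \sum_(i < n) \sum_(q < Nq) tau n Mq c k i q.
Definition cC {m} n Mq Nq (c : config m) (i : 'I_n) : int :=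
  \sum_(k < m) \sum_(q < Nq) tau n Mq c k i q.
Definition cQ {m} n Mq Nq (c : config m) : int :=
  \sum_(k < m) \sum_(i < n) \sum_(q < Nq) tau n Mq c k i q * (Mq + q%:Z).
Definition cvalid {m} n Mq Nq (c : config m) :=
  forall k, valid (in_beta (c.2 k) (c.1 k)) (Mq * n%:Z) (Nq * n)%N.

Lemma comp_split {m} n Mq Nq (c : config m) k (g : int -> int) :
  \sum_(t < Nq * n) ind (in_beta (c.2 k) (c.1 k) (Mq * n%:Z + t%:Z)) * g (Mq * n%:Z + t%:Z) =
  \sum_(i < n) \sum_(q < Nq) tau n Mq c k i q * g ((Mq + q%:Z) * n%:Z + i%:Z).
Proof.
rewrite (split_sum Nq n (fun t => ind (in_beta (c.2 k) (c.1 k) (Mq * n%:Z + t%:Z)) * g (Mq * n%:Z + t%:Z))).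
rewrite exchange_big /=; apply: eq_bigr => i _; apply: eq_bigr => q _.
have -> : Mq * n%:Z + (q * n + i)%N%:Z = (Mq + q%:Z) * n%:Z + i%:Z.
  by rewrite PoszD PoszM; ring.
by [].
Qed.

Lemma sum3_lin m n Nq (t : 'I_m -> 'I_n -> nat -> int) (A : nat -> int) (B : 'I_n -> int) (cst : int) :
  \sum_(k < m) \sum_(i < n) \sum_(q < Nq) t k i q * (A q * cst + B i) =
  cst * (\sum_(k < m) \sum_(i < n) \sum_(q < Nq) t k i q * A q) +
  \sum_(i < n) B i * (\sum_(k < m) \sum_(q < Nq) t k i q).
Proof.
have e1 : \sum_(i < n) B i * (\sum_(k < m) \sum_(q < Nq) t k i q) =
          \sum_(k < m) \sum_(i < n) \sum_(q < Nq) t k i q * B i.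
  rewrite [RHS]exchange_big; apply: eq_bigr => i _; rewrite mulr_sumr.
  apply: eq_bigr => k _; rewrite mulr_sumr; apply: eq_bigr => q _; ring.
have e2 : cst * (\sum_(k < m) \sum_(i < n) \sum_(q < Nq) t k i q * A q) =
          \sum_(k < m) \sum_(i < n) \sum_(q < Nq) t k i q * A q * cst.
  rewrite mulr_sumr; apply: eq_bigr => k _; rewrite mulr_sumr.
  apply: eq_bigr => i _; rewrite mulr_sumr; apply: eq_bigr => q _; ring.
rewrite e1 e2 -big_split; apply: eq_bigr => k _; rewrite -big_split.
apply: eq_bigr => i _; rewrite -big_split; apply: eq_bigr => q _ /=; by rewrite mulrDr mulrA.
Qed.

Lemma data_charge {m n Mq Nq} {c : config m} k : cvalid n Mq Nq c ->
  c.2 k = Mq * n%:Z + cA n Mq Nq c k.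
Proof.
move=> hv; have [h1 _ _] := comp_formulas (hv k).
rewrite {1}h1; congr (_ + _).
have e := comp_split n Mq Nq c k (fun _ => 1); simpl in e.
rewrite (eq_bigr (fun t : 'I_(Nq * n) => ind (in_beta (c.2 k) (c.1 k) (Mq * n%:Z + t%:Z)) * 1)); last by move=> t _; rewrite mulr1.
rewrite e /cA; apply: eq_bigr => i _; apply: eq_bigr => q _; by rewrite mulr1.
Qed.

Definition Zs {m} n Mq (c : config m) : int :=
  \sum_(k < m) \sum_(x < absz (c.2 k - Mq * n%:Z)%R) (c.2 k - 1 - x%:Z).
Definition Zr {m} n Mq (c : config m) (j : int) : int :=
  \sum_(k < m) \sum_(x < absz (c.2 k - Mq * n%:Z)%R) divz (c.2 k - 1 - x%:Z - j) n%:Z.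

Lemma data_size {m n Mq Nq} {c : config m} : cvalid n Mq Nq c ->
  (config_size m c)%:Z = n%:Z * cQ n Mq Nq c + \sum_(i < n) i%:Z * cC n Mq Nq c i - Zs n Mq c.
Proof.
move=> hv; rewrite /config_size Posz_sum /Zs.
have E := sum3_lin m n Nq (tau n Mq c) (fun q => Mq + q%:Z) (fun i : 'I_n => i%:Z) n%:Z; simpl in E.
rewrite /cQ /cC -E -sumrB; apply: eq_bigr => k _.
have [_ h2 _] := comp_formulas (hv k); rewrite h2; congr (_ - _).
have e := comp_split n Mq Nq c k (fun b => b); simpl in e.
by rewrite e.
Qed.

Lemma data_res {m n Mq Nq} {c : config m} j : (0 < n)%N -> cvalid n Mq Nq c ->
  (rescount n m c j)%:Z = cQ n Mq Nq c + \sum_(i < n) divz (i%:Z - j) n%:Z * cC n Mq Nq c i - Zr n Mq c j.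
Proof.
move=> hn hv; rewrite /rescount Posz_sum /Zr.
have E := sum3_lin m n Nq (tau n Mq c) (fun q => Mq + q%:Z) (fun i : 'I_n => divz (i%:Z - j) n%:Z) 1; simpl in E.
rewrite -(mul1r (cQ n Mq Nq c)) /cQ /cC -E -sumrB; apply: eq_bigr => k _.
have [_ _ h3] := comp_formulas (hv k); rewrite h3 //; congr (_ - _).
rewrite (comp_split n Mq Nq c k (fun b => divz (b - j) n%:Z)).
apply: eq_bigr => i _; apply: eq_bigr => q _; congr (_ * _).
have -> : (Mq + q%:Z) * n%:Z + i%:Z - j = (Mq + q%:Z) * n%:Z + (i%:Z - j) by ring.
rewrite divzMDl; first by ring.
by rewrite eqz_nat -lt0n.
Qed.

Lemma div_small2 (i j n : nat) : (i < n)%N -> (j < n)%N ->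
  divz (i%:Z - j%:Z) n%:Z = - ((i < j)%N : nat)%:Z.
Proof.
move=> hi hj; case: (ltnP i j) => h /=.
  have -> : i%:Z - j%:Z = (-1) * n%:Z + (i%:Z - j%:Z + n%:Z) by ring.
  rewrite dm_div //; lia.
have -> : i%:Z - j%:Z = 0 * n%:Z + (i%:Z - j%:Z) by ring.
rewrite dm_div //; lia.
Qed.

Lemma sumC_A {m} n Mq Nq (c : config m) :
  \sum_(i < n) cC n Mq Nq c i = \sum_(k < m) cA n Mq Nq c k.
Proof. by rewrite /cC /cA exchange_big. Qed.

Definition Ps {m} n Mq Nq (c : config m) (j : nat) : int :=
  \sum_(i < n) ((i < j)%N : nat)%:Z * cC n Mq Nq c i.

Lemma Ps_diff {m} n Mq Nq (c : config m) (i : 'I_n) :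
  cC n Mq Nq c i = Ps n Mq Nq c i.+1 - Ps n Mq Nq c i.
Proof.
rewrite /Ps -sumrB (bigD1 i) //= big1 ?addr0.
  by rewrite ltnSn ltnn /=; ring.
move=> i' ne; rewrite -mulrBl.
have : (i' : nat) != i by [].
rewrite ltnS leq_eqVlt => /negPf ->; rewrite /=.
by case: (i' < i)%N => /=; ring.
Qed.

Lemma Posz_inj (a b : nat) : a%:Z = b%:Z -> a = b.
Proof. by case. Qed.

Lemma data_iff {m} n Mq Nq (c c' : config m) : (0 < n)%N ->
  cvalid n Mq Nq c -> cvalid n Mq Nq c' ->
  approx n m c c' <->
  [/\ forall k, cA n Mq Nq c k = cA n Mq Nq c' k,
      forall i, cC n Mq Nq c i = cC n Mq Nq c' i &
      cQ n Mq Nq c = cQ n Mq Nq c'].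
Proof.
move=> hn hv hv'; split.
  move=> [hs [hsz hres]].
  have hA : forall k, cA n Mq Nq c k = cA n Mq Nq c' k.
    move=> k; have := data_charge k hv; have := data_charge k hv'.
    rewrite hs => -> /addrI; done.
  have hZ : forall j, Zr n Mq c j = Zr n Mq c' j by move=> j; rewrite /Zr hs.
  have E : forall j, cQ n Mq Nq c + \sum_(i < n) divz (i%:Z - j) n%:Z * cC n Mq Nq c i =
                     cQ n Mq Nq c' + \sum_(i < n) divz (i%:Z - j) n%:Z * cC n Mq Nq c' i.
    move=> j; have := data_res j hn hv; have := data_res j hn hv'.
    rewrite hres hZ => -> /eqP; rewrite subr_eq subrK => /eqP; done.
  have hQ : cQ n Mq Nq c = cQ n Mq Nq c'.
    have := E 0; rewrite !big1 ?addr0 // => i _;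
      rewrite subr0 divz_small ?mul0r //; have := ltn_ord i; lia.
  have hP : forall j, (j <= n)%N -> Ps n Mq Nq c j = Ps n Mq Nq c' j.
    move=> j; rewrite leq_eqVlt => /orP [/eqP ->|hj].
      rewrite /Ps; under eq_bigr do rewrite ltn_ord mul1r.
      under [RHS]eq_bigr do rewrite ltn_ord mul1r.
      by rewrite !sumC_A; apply: eq_bigr => k _.
    have := E j%:Z; rewrite hQ => /addrI.
    rewrite /Ps (eq_bigr (fun i : 'I_n => - (((i < j)%N : nat)%:Z * cC n Mq Nq c i))); last first.
      by move=> i _; rewrite div_small2 // mulNr.
    rewrite [RHS](eq_bigr (fun i : 'I_n => - (((i < j)%N : nat)%:Z * cC n Mq Nq c' i))); last first.
      by move=> i _; rewrite div_small2 // mulNr.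
    rewrite !sumrN => /eqP; rewrite eqr_opp => /eqP; done.
  split => // i; rewrite !Ps_diff hP ?hP //; have := ltn_ord i; lia.
move=> [hA hC hQ].
have hs : c.2 = c'.2.
  by apply/ffunP => k; rewrite (data_charge k hv) (data_charge k hv') hA.
split => //; split.
  apply: Posz_inj; rewrite (data_size hv) (data_size hv') hQ /Zs hs.
  by congr (_ + _ - _); apply: eq_bigr => i _; rewrite hC.
move=> j; apply: Posz_inj; rewrite (data_res j hn hv) (data_res j hn hv') hQ /Zr hs.
by congr (_ + _ - _); apply: eq_bigr => i _; rewrite hC.
Qed.

Definition FF e r (c : config r) : config e := eta e (Psi e r c).

Lemma tauF e r Mq (c : config r) (i : 'I_e) (j : 'I_r) q : (0 < e)%N -> (0 < r)%N ->
  tau r Mq (FF e r c) i j q = tau e Mq c (rev_ord j) i q.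
Proof.
move=> he hr; apply: ind_iff; rewrite /FF (F_iff _ _ _ _ _ he hr).
have hj : 0 <= j%:Z < r%:Z by have := ltn_ord j; lia.
rewrite dm_div // dm_mod //; split.
  move=> [k [ek hk]]; have -> : rev_ord j = k by apply: val_inj => /=; lia.
  done.
by move=> h; exists (rev_ord j); split => //=; rewrite subnS; have := ltn_ord j; lia.
Qed.

Lemma cvalidF e r Mq Nq (c : config r) : (0 < e)%N -> (0 < r)%N ->
  cvalid e Mq Nq c -> cvalid r Mq Nq (FF e r c).
Proof.
move=> he hr hv i; split => b hb; rewrite /FF (F_iff _ _ _ _ _ he hr).
  have hm := mod_bnd b hr.
  have [k ek] := ex_ord r (r%:Z - 1 - modz b r%:Z) ltac:(lia).
  exists k; split => //; apply: (proj1 (hv k)).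
  have h1 : divz b r%:Z < Mq by rewrite ltz_divLR //; lia.
  have hi := ltn_ord i.
  nia.
move=> [k [_ hk]]; apply: (proj2 (hv k) _ _ hk).
have h1 : Mq + Nq%:Z <= divz b r%:Z by rewrite lez_divRL //; move: hb; rewrite PoszM; lia.
rewrite PoszM; nia.
Qed.

Lemma FA e r Mq Nq (c : config r) i : (0 < e)%N -> (0 < r)%N ->
  cA r Mq Nq (FF e r c) i = cC e Mq Nq c i.
Proof.
move=> he hr; rewrite /cA /cC.
rewrite [RHS](reindex_inj rev_ord_inj); apply: eq_bigr => j _.
by apply: eq_bigr => q _; rewrite tauF.
Qed.

Lemma FC e r Mq Nq (c : config r) j : (0 < e)%N -> (0 < r)%N ->
  cC r Mq Nq (FF e r c) j = cA e Mq Nq c (rev_ord j).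
Proof.
move=> he hr; rewrite /cA /cC; apply: eq_bigr => i _.
by apply: eq_bigr => q _; rewrite tauF.
Qed.

Lemma FQ e r Mq Nq (c : config r) : (0 < e)%N -> (0 < r)%N ->
  cQ r Mq Nq (FF e r c) = cQ e Mq Nq c.
Proof.
move=> he hr; rewrite /cQ exchange_big /=.
rewrite [RHS](reindex_inj rev_ord_inj); apply: eq_bigr => j _.
apply: eq_bigr => i _; apply: eq_bigr => q _; by rewrite tauF.
Qed.

Lemma F_approx e r Mq Nq (c c' : config r) : (0 < e)%N -> (0 < r)%N ->
  cvalid e Mq Nq c -> cvalid e Mq Nq c' ->
  approx e r c c' <-> approx r e (FF e r c) (FF e r c').
Proof.
move=> he hr hv hv'.
rewrite (data_iff _ _ _ _ _ he hv hv') (data_iff _ _ _ _ _ hr (cvalidF _ _ _ _ _ he hr hv) (cvalidF _ _ _ _ _ he hr hv')).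
rewrite !FQ //; split.
  move=> [hA hC hQ]; split => // x; rewrite ?FA ?FC //.
move=> [hA hC hQ]; split => // x; last by have := hA x; rewrite !FA.
by have := hC (rev_ord x); rewrite !FC // rev_ordK.
Qed.

Lemma cvalid_bnd {m} n (c : config m) D : (0 < n)%N -> (Dc c <= D)%N ->
  cvalid n (- D%:Z) (2 * D)%N c.
Proof.
move=> hn hD k; have [h1 h2] := bnd_comp _ c k D hD.
split => b hb; [apply: h1 | apply: h2]; move: hb; rewrite ?PoszM; nia.
Qed.

Lemma config_ext {m} (c d : config m) :
  (forall k b, in_beta (c.2 k) (c.1 k) b <-> in_beta (d.2 k) (d.1 k) b) -> c = d.
Proof.
move=> H.
have h : forall k, c.2 k = d.2 k /\ c.1 k = d.1 k.
  move=> k; have [e1 e2] := ib_inj _ _ _ _ (proj2_sig (c.1 k)) (proj2_sig (d.1 k)) (H k).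
  by split => //; apply: val_inj.
case: c d h {H} => c1 c2 [d1 d2] /= h.
by congr pair; apply/ffunP => k; have [] := h k.
Qed.

Lemma F_back e r (c : config r) (k : 'I_r) (i : 'I_e) y : (0 < e)%N -> (0 < r)%N ->
  i%:Z = modz y e%:Z ->
  (in_beta (c.2 k) (c.1 k) y <->
   in_beta ((FF e r c).2 i) ((FF e r c).1 i) (divz y e%:Z * r%:Z + (r%:Z - 1 - k%:Z))).
Proof.
move=> he hr ei; rewrite /FF (F_iff _ _ _ _ _ he hr).
have hk : 0 <= r%:Z - 1 - k%:Z < r%:Z by have := ltn_ord k; lia.
rewrite dm_div // dm_mod // ei -divz_eq; split.
  by move=> h; exists k; split => //; lia.
by move=> [k' [ek h]]; have -> : k = k' by apply: val_inj => /=; lia.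
Qed.

Lemma FF_inj e r (c1 c2 : config r) : (0 < e)%N -> (0 < r)%N ->
  FF e r c1 = FF e r c2 -> c1 = c2.
Proof.
move=> he hr E; apply: config_ext => k y.
have [i ei] := ex_ord e (modz y e%:Z) (mod_bnd y he).
by rewrite (F_back _ _ _ k i y he hr ei) (F_back _ _ _ k i y he hr ei) E.
Qed.

Definition Bp e r (d : config e) (k : 'I_r) (y : int) : Prop :=
  exists i : 'I_e, i%:Z = modz y e%:Z /\
    in_beta (d.2 i) (d.1 i) (divz y e%:Z * r%:Z + (r%:Z - 1 - k%:Z)).

Lemma Bp_bnd e r (d : config e) k : (0 < e)%N -> (0 < r)%N ->
  bnd (Bp e r d k) (Dc d * e)%N.
Proof.
move=> he hr; have hk := ltn_ord k.
split => y hy.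
  have [i ei] := ex_ord e (modz y e%:Z) (mod_bnd y he).
  exists i; split => //; apply: (proj1 (bnd_comp _ d i (Dc d) (leqnn _))).
  have h1 : divz y e%:Z < - (Dc d)%:Z by rewrite ltz_divLR //; move: hy; rewrite PoszM; lia.
  nia.
move=> [i [_ h]]; apply: (proj2 (bnd_comp _ d i (Dc d) (leqnn _)) _ _ h).
have h1 : (Dc d)%:Z <= divz y e%:Z by rewrite lez_divRL //; move: hy; rewrite PoszM; lia.
nia.
Qed.

Lemma FF_surj e r (d : config e) : (0 < e)%N -> (0 < r)%N ->
  exists c : config r, FF e r c = d.
Proof.
move=> he hr.
have H : forall k : 'I_r, exists ps : Defs.partition * int,
    forall y, Bp e r d k y <-> in_beta ps.2 ps.1 y.
  move=> k; have [p [s hs]] := bnd_exists (Bp_bnd e r d k he hr).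
  by exists (p, s).
pose f k := proj1_sig (constructive_indefinite_description _ (H k)).
have hf : forall k y, Bp e r d k y <-> in_beta (f k).2 (f k).1 y.
  by move=> k; exact: (proj2_sig (constructive_indefinite_description _ (H k))).
exists ([ffun k => (f k).1], [ffun k => (f k).2]).
apply: config_ext => i x; rewrite /FF (F_iff _ _ _ _ _ he hr) /=.
have hi : 0 <= i%:Z < e%:Z by have := ltn_ord i; lia.
split.
  move=> [k [ek]]; rewrite !ffunE -hf => -[i' [ei' h]].
  move: ei' h; rewrite dm_div // dm_mod // => ei' h.
  have -> : i = i' by apply: val_inj => /=; lia.
  have e2 : r%:Z - 1 - k%:Z = modz x r%:Z by lia.
  by rewrite e2 -divz_eq in h.
move=> h.
have hm := mod_bnd x hr.
have [k ek] := ex_ord r (r%:Z - 1 - modz x r%:Z) ltac:(lia).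
exists k; split => //; rewrite !ffunE -hf; exists i.
rewrite dm_div // dm_mod //; split => //.
have e2 : r%:Z - 1 - k%:Z = modz x r%:Z by rewrite ek; ring.
by rewrite e2 -divz_eq.
Qed.

Lemma pos_of_2 n : (2 <= n)%N -> (0 < n)%N.
Proof. move=> h; lia. Qed.

Local Close Scope ring_scope.

Theorem corollary2p14 (e r : nat) (he : (2 <= e)%N) (hr : (2 <= r)%N)
    (c : config r) :
  let F := fun c' : config r => eta e (Psi e r c') in
  (forall c', approx e r c c' -> approx r e (F c) (F c')) /\
  (forall c1 c2, approx e r c c1 -> approx e r c c2 -> F c1 = F c2 -> c1 = c2) /\
  (forall d : config e, approx r e (F c) d ->
     exists c', approx e r c c' /\ F c' = d).
Proof.
move=> F.
have he0 := pos_of_2 _ he; have hr0 := pos_of_2 _ hr.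
split; [|split].
- move=> c' h.
  have hv := cvalid_bnd e c (Dc c + Dc c') he0 (leq_addr _ _).
  have hv' := cvalid_bnd e c' (Dc c + Dc c') he0 (leq_addl _ _).
  exact: (proj1 (F_approx _ _ _ _ c c' he0 hr0 hv hv') h).
- by move=> c1 c2 _ _ E; apply: (FF_inj _ _ _ _ he0 hr0 E).
- move=> d h.
  have [c' E] := FF_surj e r d he0 hr0.
  exists c'; split => //.
  have hv := cvalid_bnd e c (Dc c + Dc c') he0 (leq_addr _ _).
  have hv' := cvalid_bnd e c' (Dc c + Dc c') he0 (leq_addl _ _).
  apply: (proj2 (F_approx _ _ _ _ c c' he0 hr0 hv hv')).
  by rewrite E.
Qed.
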